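(* Let $T$ be a tree with at least $3$ vertices. Then the function $v\mapsto f_{T,v}(v)$ is not constant on $V(T)$.
   Context: For a tree $T$ rooted at $v$, the values $f_{T,v}(w)$, $w\in V(T)$, are defined recursively: if $w$ has no children (no descendants) in the rooted tree, $f_{T,v}(w)=0$; otherwise let $u_0,\dots,u_k$ be the children of $w$, let $T_i$ be the subtree consisting of $u_i$ and all its descendants, rooted at $u_i$, and order them so that $c_i:=f_{T_i,u_i}(u_i)$ satisfy $c_0\ge c_1\ge\cdots\ge c_k$; then $f_{T,v}(w)=\max_{0\le i\le k}(i+c_i)$. *)

(* Defs.v *)
From mathcomp Require Import all_boot.
Unset Printing Implicit Defensive.

Definition simple_graph {V : finType} (e : rel V) : Prop :=
  symmetric e /\ irreflexive e.

Definition connected_graph {V : finType} (e : rel V) : Prop :=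
  forall x y : V, connect e x y.

Definition acyclic_graph {V : finType} (e : rel V) : Prop :=
  forall p : seq V, uniq p -> 3 <= size p -> ~~ cycle e p.

Definition is_tree {V : finType} (e : rel V) : Prop :=
  [/\ simple_graph e, connected_graph e & acyclic_graph e].

(* fval e n p w : the value f_{T,v}(w) of the paper, where w is reached from
   its parent p (p = None when w is the root v), computed with fuel n. *)
Fixpoint fval {V : finType} (e : rel V) (n : nat) (p : option V) (w : V) : nat :=
  match n with
  | 0 => 0
  | n'.+1 =>
      let cs := sort geq [seq fval e n' (Some w) u
                          | u <- enum V & e w u && (Some u != p)] in
      \max_(i < size cs) (i + nth 0 cs i)
  end.

(* f_{T,v}(v): the root value of T rooted at v.  Fuel #|V| exceeds the
   depth of any rooted tree on V, so it is the exact value. *)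
Definition rootval {V : finType} (e : rel V) (v : V) : nat :=
  fval e #|V| None v.

(* Main.v *)
Require Import Defs.
From mathcomp Require Import all_boot zify.
Unset Printing Implicit Defensive.

Definition Fm (s : seq nat) : nat :=
  let cs := sort geq s in \max_(i < size cs) (i + nth 0 cs i).

Lemma geq_total : total geq. Proof. move=> a b /=; exact: leq_total. Qed.
Lemma geq_trans : transitive geq. Proof. move=> a b c /= h1 h2; exact: leq_trans h2 h1. Qed.
Lemma geq_anti : antisymmetric geq.
Proof. move=> a b /andP[/= h1 h2]; apply/eqP; by rewrite eqn_leq h1 h2. Qed.

Lemma Fm_perm s t : perm_eq s t -> Fm s = Fm t.
Proof.
move=> h; rewrite /Fm.
by have -> := (perm_sortP geq_total geq_trans geq_anti s t h).
Qed.

Lemma Fm_ge x s : x \in s -> x <= Fm s.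
Proof.
rewrite /Fm -(mem_sort geq) => hx.
set cs := sort geq s in hx *.
have hi : index x cs < size cs by rewrite index_mem.
apply: leq_trans (leq_bigmax (F := fun i : 'I_(size cs) => i + nth 0 cs i) (Ordinal hi)).
by rewrite /= nth_index // leq_addl.
Qed.

Lemma bigmax_succ (n : nat) (F : nat -> nat) : 0 < n ->
  \max_(i < n) (F i).+1 = (\max_(i < n) F i).+1.
Proof.
elim: n => // n IH _.
rewrite !big_ord_recr /=.
case: n IH => [|n] IH; first by rewrite !big_ord0 !max0n.
by rewrite IH // maxnSS.
Qed.

Lemma Fm_nil : Fm [::] = 0.
Proof. by rewrite /Fm /= big_ord0. Qed.

Lemma Fm_cons_max x s : (forall y, y \in s -> y <= x) ->
  Fm (x :: s) = if s is [::] then x else maxn x (Fm s).+1.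
Proof.
move=> hs.
have hsort : sort geq (x :: s) = x :: sort geq s.
  have hp : perm_eq (x :: s) (x :: sort geq s) by rewrite perm_cons perm_sym perm_sort.
  rewrite (perm_sortP geq_total geq_trans geq_anti _ _ hp).
  apply: sorted_sort; first exact: geq_trans.
  rewrite /= path_sortedE; last exact: geq_trans.
  rewrite sort_sorted ?andbT; last exact: geq_total.
  by apply/allP => y; rewrite mem_sort => /hs.
rewrite {1}/Fm hsort /= big_ord_recl /=.
case: s hs hsort => [|y s] hs _.
  by rewrite big_ord0 maxn0.
congr maxn.
rewrite /Fm /= -(bigmax_succ _ (fun i => i + nth 0 (sort geq (y :: s)) i)); last by rewrite size_sort.
apply: eq_bigr => i _.
by rewrite /bump /= add1n addSn.
Qed.

Lemma Fm_single x : Fm [:: x] = x.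
Proof. by rewrite Fm_cons_max. Qed.

Fixpoint nbb {V : finType} (e : rel V) (n : nat) (p : option V) (w : V) : Prop :=
  match n with
  | 0 => False
  | n'.+1 => forall u, e w u -> Some u != p -> nbb e n' (Some w) u
  end.

Lemma fval_S {V : finType} (e : rel V) n p w :
  fval e n.+1 p w = Fm [seq fval e n (Some w) u | u <- enum V & e w u && (Some u != p)].
Proof. by []. Qed.

Lemma fval_stable {V : finType} (e : rel V) n : forall p w, nbb e n p w ->
  forall m, n <= m -> fval e n p w = fval e m p w.
Proof.
elim: n => [//|n IH] p w hb [//|m] hm.
rewrite !fval_S; congr Fm.
apply/eq_in_map => u; rewrite mem_filter => /andP[/andP[hwu hp] _].
by apply: IH => //; apply: hb.
Qed.

Lemma nbb_tree {V : finType} (e : rel V) : is_tree e ->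
  forall n s w, n + size s = #|V| -> uniq (w :: s) -> path e w s -> nbb e n (ohead s) w.
Proof.
move=> [[esym eirr] _ eacy].
elim => [|n IH] s w hsz hu hp.
  have := max_card (mem (w :: s)).
  by rewrite (card_uniqP hu) /= -hsz add0n ltnn.
move=> u hwu hup.
apply: (IH (w :: s) u); first by rewrite /= addnS -addSn.
  rewrite /= -/(uniq (w :: s)) hu andbT.
  rewrite in_cons negb_or; apply/andP; split.
    by apply: contraTneq hwu => ->; rewrite eirr.
  apply/negP => hus.
  case: s hup hu hp hus hsz => [//|p0 s] hup hu hp hus hsz.
  have hup0 : u != p0 by apply: contra hup => /eqP ->.
  set i := index u (p0 :: s).
  have hi : i < size (p0 :: s) by rewrite index_mem.
  have hnth : nth u (p0 :: s) i = u by rewrite nth_index.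
  have ht := take_nth u hi. rewrite hnth in ht.
  have hi0 : 0 < i.
    rewrite lt0n /i /= eq_sym; apply: contraNneq hup0 => /eqP.
    by case: (p0 == u) /eqP => // ->.
  apply: (negP (eacy (w :: rcons (take i (p0 :: s)) u) _ _)).
  - rewrite -ht cons_uniq; move: hu; rewrite cons_uniq => /andP[hw hu'].
    rewrite take_uniq // andbT; apply: contra hw; exact: mem_take.
  - by rewrite [size _]/= size_rcons size_take hi ltnS ltnS.
  - rewrite /cycle rcons_path last_rcons esym hwu andbT -ht.
    exact: take_path.
rewrite /= hp andbT esym hwu //.
Qed.

Lemma card_pos {V : finType} (v : V) : 0 < #|V|.
Proof. by apply/card_gt0P; exists v. Qed.

Lemma nbb_root {V : finType} (e : rel V) v : is_tree e -> nbb e #|V| None v.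
Proof. move=> ht; have := nbb_tree e ht #|V| [::] v; apply; rewrite ?addn0 //. Qed.

Lemma nbb_child {V : finType} (e : rel V) p w : is_tree e -> e p w ->
  nbb e #|V|.-1 (Some p) w.
Proof.
move=> ht hpw; have [[esym eirr] _ _] := ht.
apply: (nbb_tree e ht #|V|.-1 [:: p] w) => /=.
- by rewrite addn1 prednK // (card_pos w).
- rewrite in_cons in_nil orbF andbT.
  by apply: contraTneq hpw => ->; rewrite eirr.
- by rewrite esym hpw.
Qed.

Definition G {V : finType} (e : rel V) (p w : V) : nat := fval e #|V|.-1 (Some p) w.

Lemma rootvalE {V : finType} (e : rel V) v : is_tree e ->
  rootval e v = Fm [seq G e v u | u <- enum V & e v u].
Proof.
move=> ht; rewrite /rootval /G.
have := card_pos v; case: #|V| => [//|n] _.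
rewrite fval_S /=; congr (Fm (map _ _)).
by apply: eq_filter => u; rewrite andbT.
Qed.

Lemma GE {V : finType} (e : rel V) p w : is_tree e -> e p w ->
  G e p w = Fm [seq G e w u | u <- enum V & e w u && (u != p)].
Proof.
move=> ht hpw; rewrite /G.
rewrite (@fval_stable _ e _ _ _ (nbb_child e p w ht hpw) _ (leq_pred #|V|)).
have := card_pos w; case: #|V| => [//|n] _.
rewrite fval_S /=; congr (Fm (map _ _)).
Qed.

Lemma perm_sel {V : finType} (h : V -> nat) (P : pred V) q : P q ->
  perm_eq [seq h y | y <- enum V & P y]
          (h q :: [seq h y | y <- enum V & P y && (y != q)]).
Proof.
move=> hq.
have hu : uniq [seq y <- enum V | P y] by rewrite filter_uniq ?enum_uniq.
have hin : q \in [seq y <- enum V | P y] by rewrite mem_filter hq mem_enum.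
have := perm_to_rem hin; rewrite rem_filter // => hp.
rewrite -map_cons; apply: perm_map.
apply: (perm_trans hp); rewrite perm_cons.
suff -> : [seq y <- [seq y <- enum V | P y] | predC1 q y] = [seq y <- enum V | P y && (y != q)] by [].
rewrite -(filter_predI (predC1 q) P (enum V)).
by apply: eq_filter => y /=; rewrite andbC.
Qed.

Lemma mem_sel {V : finType} (h : V -> nat) (P : pred V) y : P y ->
  h y \in [seq h y | y <- enum V & P y].
Proof. by move=> hy; apply: map_f; rewrite mem_filter hy mem_enum. Qed.

Lemma G_mono {V : finType} (e : rel V) p x y : is_tree e -> e p x -> e x y -> y != p ->
  G e x y <= G e p x.
Proof.
move=> ht hpx hxy hyp; rewrite (GE e p x ht hpx); apply: Fm_ge.
by apply: (mem_sel (G e x) (fun u => e x u && (u != p))); rewrite hxy hyp.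
Qed.

Lemma argmax {V : finType} (h : V -> nat) (P : pred V) y0 : P y0 ->
  exists z, P z /\ forall y, P y -> h y <= h z.
Proof.
move=> hy0; case: (arg_maxnP h hy0) => z hz hmax.
by exists z; split.
Qed.

Lemma walk {V : finType} (e : rel V) : is_tree e -> forall n p x,
  nbb e n (Some p) x -> e p x -> (forall y, e p y -> G e p y <= G e p x) ->
  exists u w, [/\ e u w, (forall y, e u y -> G e u y <= G e u w)
                       & (forall z, e w z -> G e w z <= G e w u)].
Proof.
move=> ht; have [[esym eirr] _ _] := ht.
elim => [//|n IH] p x hb hpx hp.
have hxp : e x p by rewrite esym.
have [z [hz hzmax]] := argmax (G e x) (e x) p hxp.
case: (eqVneq z p) => [ezp|nzp].
  exists p, x; split => // y hy; rewrite -ezp; exact: hzmax.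
apply: (IH x z) => //.
by apply: hb.
Qed.

Lemma descent {V : finType} (e : rel V) : is_tree e -> forall n p x,
  nbb e n (Some p) x -> e p x -> (forall y, e x y -> G e x y <= G e x p) ->
  exists l m, [/\ e l m, (forall y, e l y -> y = m)
                       & G e l m <= maxn (G e x p) (G e p x)].
Proof.
move=> ht; have [[esym eirr] _ _] := ht.
elim => [//|n IH] p x hb hpx hx.
have hxp : e x p by rewrite esym.
case: (boolP [exists y, e x y && (y != p)]) => [/existsP [y0 hy0]|hno].
  have [z [/andP[hxz hzp] hzmax]] := argmax (G e x) (fun y => e x y && (y != p)) y0 hy0.
  have hzx : e z x by rewrite esym.
  have hpre : forall y, e z y -> G e z y <= G e z x.
    move=> y hzy; case: (eqVneq y x) => [->//|nyx].
    apply: leq_trans (G_mono e x z y ht hxz hzy nyx) _.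
    apply: leq_trans (hx z hxz) _.
    apply: (G_mono e z x p ht hzx hxp); by rewrite eq_sym.
  have hsz : Some z != Some p by rewrite (inj_eq (@Some_inj _)).
  have [l [m [hlm hl hb2]]] := IH x z (hb z hxz hsz) hxz hpre.
  exists l, m; split => //.
  apply: leq_trans hb2 _.
  rewrite geq_max; apply/andP; split; last first.
    by apply: leq_trans (hx z hxz) (leq_maxl _ _).
  set K := [seq G e x y | y <- enum V & (e x y && (y != p)) && (y != z)].
  have hGzx : G e z x = Fm (G e x p :: K).
    rewrite (GE e z x ht hzx); apply: Fm_perm.
    have hs : (fun y => e x y && (y != z)) p by rewrite /= hxp eq_sym.
    apply: (perm_trans (perm_sel (G e x) (fun y => e x y && (y != z)) p hs)).
    rewrite perm_cons /K.
    suff -> : [seq y <- enum V | (e x y && (y != z)) && (y != p)] =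
              [seq y <- enum V | (e x y && (y != p)) && (y != z)] by [].
    by apply: eq_filter => y; rewrite -!andbA [(y != z) && _]andbC.
  have hGpx : G e p x = Fm (G e x z :: K).
    rewrite (GE e p x ht hpx); apply: Fm_perm.
    apply: (perm_sel (G e x) (fun y => e x y && (y != p)) z); by rewrite /= hxz.
  have hK : forall y, y \in K -> y <= G e x z.
    move=> y /mapP [u]; rewrite mem_filter => /andP [/andP[hu _] _] ->.
    exact: hzmax.
  have hK' : forall y, y \in K -> y <= G e x p.
    move=> y /hK h; exact: leq_trans h (hx z hxz).
  rewrite hGzx hGpx (Fm_cons_max _ _ hK) (Fm_cons_max _ _ hK').
  case: K {hK hK' hGzx hGpx} => [|k K]; first by rewrite leq_maxl.
  rewrite geq_max leq_maxl /=; exact: leq_trans (leq_maxr (G e x z) _) (leq_maxr _ _).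
exists x, p; split => //; last by rewrite leq_maxl.
move=> y hy; apply/eqP; move/existsPn: hno => /(_ y).
by rewrite hy /= negbK.
Qed.

Lemma exists_notin {V : finType} (s : seq V) : size s < #|V| -> exists x, x \notin s.
Proof.
move=> hs.
case: (boolP [exists x, x \notin s]) => [/existsP[x hx]|hn]; first by exists x.
have : #|V| <= size s.
  apply: leq_trans (card_size s); apply: subset_leq_card; apply/subsetP => x _.
  by move/existsPn: hn => /(_ x); rewrite negbK.
by rewrite leqNgt hs.
Qed.

Lemma nil_sel {V : finType} (h : V -> nat) (P : pred V) :
  (forall y, ~~ P y) -> [seq h y | y <- enum V & P y] = [::].
Proof.
move=> hP; rewrite (_ : [seq y <- enum V | P y] = [::]) //.
rewrite -(filter_pred0 (enum V)); apply: eq_filter => y /=.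
exact: negbTE (hP y).
Qed.

Theorem proposition4p4 (V : finType) (e : rel V) :
  is_tree e -> 3 <= #|V| -> exists u v : V, rootval e u <> rootval e v.
Proof.
move=> ht h3; have [[esym eirr] hconn hacy] := ht.
have [v0 _] := @exists_notin V [::] (@leq_trans 3 1 _ isT h3).
have [v1 hv1] := @exists_notin V [:: v0] (@leq_trans 3 2 _ isT h3).
have [y1 hy1] : exists y, e v0 y.
  have := hconn v0 v1; case/connectP => [[|y q]] /=.
    by move=> _ hv; move: hv1; rewrite hv mem_seq1 eqxx.
  by case/andP => hy _ _; exists y.
have [z0 [hz0 hz0max]] := argmax (G e v0) (e v0) y1 hy1.
have [u [w [huw hu hw]]] := walk e ht _ _ _ (nbb_child e v0 z0 ht hz0) hz0 hz0max.
have hwu : e w u by rewrite esym.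
set Lu := [seq G e u y | y <- enum V & e u y && (y != w)].
set Lw := [seq G e w y | y <- enum V & e w y && (y != u)].
have ha : G e w u = Fm Lu by rewrite (GE e w u ht hwu).
have hb : G e u w = Fm Lw by rewrite (GE e u w ht huw).
have hLu : forall y, y \in Lu -> y <= G e u w.
  by move=> y /mapP [t]; rewrite mem_filter => /andP [/andP[ht' _] _] ->; apply: hu.
have hLw : forall y, y \in Lw -> y <= G e w u.
  by move=> y /mapP [t]; rewrite mem_filter => /andP [/andP[ht' _] _] ->; apply: hw.
have ru : rootval e u = Fm (G e u w :: Lu).
  by rewrite (rootvalE e u ht); apply: Fm_perm; apply: perm_sel.
have rw : rootval e w = Fm (G e w u :: Lw).
  by rewrite (rootvalE e w ht); apply: Fm_perm; apply: perm_sel.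
rewrite (Fm_cons_max _ _ hLu) in ru; rewrite (Fm_cons_max _ _ hLw) in rw.
have nilU : Lu = [::] -> forall y, e u y -> y = w.
  move=> EU y hy; apply/eqP; apply/negPn/negP => hyw.
  have := mem_sel (G e u) (fun y => e u y && (y != w)) y; rewrite /= hy hyw.
  by rewrite -/Lu EU in_nil => /(_ isT).
have nilW : Lw = [::] -> forall y, e w y -> y = u.
  move=> EW y hy; apply/eqP; apply/negPn/negP => hyw.
  have := mem_sel (G e w) (fun y => e w y && (y != u)) y; rewrite /= hy hyw.
  by rewrite -/Lw EW in_nil => /(_ isT).
case EU : Lu ru ha => [|k1 L1] ru ha; case EW : Lw rw hb => [|k2 L2] rw hb.
- exfalso.
  have [v3 hv3] := @exists_notin V [:: u; w] h3.
  have := hconn u v3; case/connectP => q hq hv3q.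
  have key : forall q x, x \in [:: u; w] -> path e x q -> last x q \in [:: u; w].
    elim => [//|y q' IH] x hx /= /andP[hxy hq']; apply: IH hq'.
    move: hx; rewrite !inE => /orP[] /eqP hx; subst x.
      by rewrite (nilU EU y hxy) eqxx orbT.
    by rewrite (nilW EW y hxy) eqxx.
  have := key q u (mem_head u [:: w]) hq.
  by rewrite -hv3q (negbTE hv3).
- exists u, w; rewrite ru rw -hb ha Fm_nil; lia.
- exists u, w; rewrite ru rw -ha hb Fm_nil; lia.
- rewrite -ha in ru; rewrite -hb in rw.
  case: (ltngtP (G e w u) (G e u w)) => hab.
  + exists u, w; rewrite ru rw; lia.
  + exists u, w; rewrite ru rw; lia.
  have [l [m [hlm hl hbnd]]] :=
    descent e ht _ _ _ (nbb_child e w u ht hwu) hwu hu.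
  have rl : rootval e l = G e l m.
    rewrite (rootvalE e l ht) (Fm_perm _ _ (perm_sel (G e l) (e l) m hlm)).
    rewrite nil_sel ?Fm_single // => y /=; apply/negP => /andP[hy hym].
    by rewrite (hl y hy) eqxx in hym.
  exists l, u; rewrite rl ru; lia.
Qed.

Print Assumptions proposition4p4.
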